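(* Let $G = (\mathbb{Z}/2\mathbb{Z})^n$, $N = 2^n$, let $\epsilon \in (0,\tfrac12)$ and let $A \subseteq G$. Then there is a subgroup $H \leq G$ of index $|G/H| \leq W(\epsilon^{-3})$ which is $\epsilon$-regular for $A$.
   Context: For a subgroup $H \leq G$ and $g \in G$, let $A_H^{+g} \subseteq H$ be the set $\{x \in H : x + g \in A\}$. An element $g \in G$ is an $\epsilon$-regular value (with respect to $A$ and $H$) if for every nontrivial character $\chi$ of $H$ one has $\left|\sum_{x \in H} A_H^{+g}(x)\chi(x)\right| \leq \epsilon|H|$ (here $A_H^{+g}$ also denotes its indicator function on $H$). $H$ is $\epsilon$-regular for $A$ if the number of $g \in G$ which are not $\epsilon$-regular values is at most $\epsilon N$. $W(t)$ denotes a tower of twos of height $\lceil t\rceil$ ($W(t) = w_{\lceil t \rceil}$ with $w_0 = 1$, $w_{h+1} = 2^{w_h}$). *)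

(* Defs.v *)
From HB Require Import structures.
From mathcomp Require Import all_boot all_order all_algebra.
From mathcomp Require Import boolp reals complex.
Set Implicit Arguments. Unset Strict Implicit. Unset Printing Implicit Defensive.
Import Order.TTheory GRing.Theory Num.Theory.
Local Open Scope ring_scope.
Local Open Scope complex_scope.

Notation G2 n := 'rV['F_2]_n.

Definition is_subgroup n (H : {set G2 n}) : Prop :=
  0 \in H /\ (forall x y, x \in H -> y \in H -> x + y \in H).

Definition cosets n (H : {set G2 n}) : {set {set G2 n}} :=
  [set [set g + h | h in H] | g : G2 n].
Definition quot_card n (H : {set G2 n}) : nat := #|cosets H|.

(* A character of H: a homomorphism from H to the multiplicative group C^*,
   C = R[i] the complex numbers over the reals R (values outside H irrelevant). *)
Definition is_character (R : realType) n (H : {set G2 n}) (chi : G2 n -> R[i]) : Prop :=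
  (forall x, x \in H -> chi x != 0) /\
  (forall x y, x \in H -> y \in H -> chi (x + y) = chi x * chi y).
Definition nontrivial_on (R : realType) n (H : {set G2 n}) (chi : G2 n -> R[i]) : Prop :=
  exists2 x, x \in H & chi x != 1.

(* Indicator of A_H^{+g} on H: x |-> [x + g \in A]. *)
Definition shifted_ind (R : realType) n (A : {set G2 n}) (g x : G2 n) : R[i] :=
  (x + g \in A)%:R.

Definition regular_value (R : realType) n (eps : R) (A H : {set G2 n}) (g : G2 n) : Prop :=
  forall chi : G2 n -> R[i], is_character H chi -> nontrivial_on H chi ->
    `| \sum_(x in H) shifted_ind R A g x * chi x | <= (eps * #|H|%:R)%:C.

Definition regular_subgroup (R : realType) n (eps : R) (A H : {set G2 n}) : Prop :=
  (#|[set g : G2 n | ~~ `[< regular_value eps A H g >]]|%:R <= eps * (2 ^ n)%:R).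

Fixpoint tower (h : nat) : nat := if h is h'.+1 then 2 ^ tower h' else 1.
Definition W (R : realType) (t : R) : nat := tower `|Num.ceil t|%N.

(* Main.v *)
Require Import Defs.
From HB Require Import structures.
From mathcomp Require Import all_boot all_order all_algebra.
From mathcomp Require Import boolp reals complex.
From mathcomp Require Import ring lra zify.
Import Order.TTheory GRing.Theory Num.Theory.
Local Open Scope ring_scope.


Definition Dc (R : realType) {n} (A H : {set 'rV['F_2]_n}) x : R :=
  \sum_(h in H) ((h + x) \in A)%:R.
Definition dd (R : realType) {n} (A H : {set 'rV['F_2]_n}) x : R :=
  Dc R A H x / #|H|%:R.
Definition En (R : realType) {n} (A H : {set 'rV['F_2]_n}) : R :=
  \sum_x dd R A H x ^+ 2.
Definition Sg (R : realType) {n} (A H : {set 'rV['F_2]_n}) (s : 'rV['F_2]_n -> R) x : R :=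
  \sum_(h in H) ((h + x) \in A)%:R * s h.



Set Implicit Arguments. Unset Strict Implicit. Unset Printing Implicit Defensive.

Lemma addxx2 n (x : 'rV['F_2]_n) : x + x = 0.
Proof.
apply/matrixP => i j; rewrite !mxE.
by case: (x i j) => [[|[|//]]] ?; apply/val_inj.
Qed.

Lemma oppv n (x : 'rV['F_2]_n) : - x = x.
Proof. by apply/eqP; rewrite eq_sym -subr_eq0 opprK addxx2. Qed.

Lemma sg_add_in n (H : {set 'rV['F_2]_n}) x y : is_subgroup H -> y \in H ->
  (x + y \in H) = (x \in H).
Proof.
case=> H0 HD yH; apply/idP/idP => [xyH|]; last by move=> xH; apply: HD.
have -> : x = x + y + y by rewrite -addrA addxx2 addr0.
by apply: HD.
Qed.

Lemma shift_sum (T : nmodType) n (H : {set 'rV['F_2]_n}) (F : 'rV['F_2]_n -> T) h0 :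
  is_subgroup H -> h0 \in H -> \sum_(h in H) F (h + h0) = \sum_(h in H) F h.
Proof.
move=> sH h0H; rewrite [RHS](reindex_inj (addIr h0)) /=.
by apply: eq_bigl => h; rewrite sg_add_in.
Qed.

Lemma shift_sumT (T : nmodType) n (F : 'rV['F_2]_n -> T) h0 :
  \sum_x F (x + h0) = \sum_x F x.
Proof. by rewrite [RHS](reindex_inj (addIr h0)). Qed.

Lemma card_G2 n : #|{: 'rV['F_2]_n}| = (2 ^ n)%N.
Proof. by rewrite card_mx card_Fp // mul1n. Qed.
Lemma card_sg_gt0 n (H : {set 'rV['F_2]_n}) : is_subgroup H -> (0 < #|H|)%N.
Proof. by case=> H0 _; apply/card_gt0P; exists 0. Qed.

Lemma cardH_neq0 (R : realType) n (H : {set 'rV['F_2]_n}) : is_subgroup H -> #|H|%:R != 0 :> R.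
Proof. by move=> sH; rewrite pnatr_eq0 -lt0n card_sg_gt0. Qed.

Lemma Dc_sum_shift (R : realType) n (A H K : {set 'rV['F_2]_n}) x (s : _ -> R) :
  is_subgroup H -> is_subgroup K -> K \subset H ->
  (forall h k, h \in H -> k \in K -> s (h + k) = s h) ->
  \sum_(h in H) Dc R A K (h + x) * s h = #|K|%:R * Sg R A H s x.
Proof.
move=> sH sK KH hs.
rewrite /Dc.
under eq_bigr => h hH do rewrite mulr_suml.
rewrite exchange_big /= -sum1_card natr_sum mulr_suml.
apply: eq_bigr => k kK; rewrite mul1r.
rewrite -(shift_sum _ sH (subsetP KH k kK)) /Sg.
apply: eq_bigr => h hH; rewrite hs //.
by rewrite [h + k]addrC !addrA addxx2 add0r.
Qed.

Lemma mean_id (R : realType) n (A H K : {set 'rV['F_2]_n}) x :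
  is_subgroup H -> is_subgroup K -> K \subset H ->
  \sum_(h in H) dd R A K (h + x) = #|H|%:R * dd R A H x.
Proof.
move=> sH sK KH.
have := @Dc_sum_shift R n A H K x (fun _ => (1 : R)) sH sK KH (fun _ _ _ _ => erefl).
rewrite /dd /Sg.
under eq_bigr => h _ do rewrite mulr1.
under [X in _ = _ * X -> _]eq_bigr => h _ do rewrite mulr1.
move=> e; rewrite -mulr_suml e -/(Dc R A H x).
move: (cardH_neq0 R sH) (cardH_neq0 R sK) => h1 h2.
by field; apply/andP.
Qed.

Lemma energy_id (R : realType) n (A H K : {set 'rV['F_2]_n}) :
  is_subgroup H -> is_subgroup K -> K \subset H ->
  \sum_x \sum_(h in H) (dd R A K (h + x) - dd R A H x) ^+ 2 =
  #|H|%:R * (En R A K - En R A H).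
Proof.
move=> sH sK KH.
have e1 : \sum_x \sum_(h in H) dd R A K (h + x) ^+ 2 = #|H|%:R * En R A K.
  rewrite exchange_big /= -sum1_card natr_sum mulr_suml.
  apply: eq_bigr => h _; rewrite mul1r /En.
  by under eq_bigr => x _ do rewrite addrC; rewrite (shift_sumT (fun x => dd R A K x ^+ 2)).
have e2 : \sum_x \sum_(h in H) (dd R A K (h + x) * dd R A H x) = #|H|%:R * En R A H.
  rewrite /En mulr_sumr; apply: eq_bigr => x _.
  by rewrite -mulr_suml mean_id // expr2 mulrA.
have e3 : \sum_x \sum_(h in H) dd R A H x ^+ 2 = #|H|%:R * En R A H.
  rewrite /En mulr_sumr; apply: eq_bigr => x _.
  by rewrite sumr_const mulr_natl.
transitivity (\sum_x \sum_(h in H) (dd R A K (h + x) ^+ 2 - 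
   (dd R A K (h + x) * dd R A H x) *+ 2 + dd R A H x ^+ 2)).
  by apply: eq_bigr => x _; apply: eq_bigr => h _; rewrite sqrrB.
under eq_bigr => x _ do rewrite big_split /= sumrB sumrMnl.
rewrite big_split /= sumrB sumrMnl e1 e2 e3.
by rewrite mulr2n; ring.
Qed.

Lemma sum_sq_lin (R : realType) (I : finType) (P : pred I) (f g : I -> R) (c d : R) :
  \sum_(i | P i) (c * f i - d * g i) ^+ 2 =
  c ^+ 2 * \sum_(i | P i) f i ^+ 2 - (c * d * 2) * \sum_(i | P i) (f i * g i)
  + d ^+ 2 * \sum_(i | P i) g i ^+ 2.
Proof.
rewrite !mulr_sumr -sumrB -big_split /=.
by apply: eq_bigr => i _; ring.
Qed.

Lemma per_x (R : realType) n (A H K : {set 'rV['F_2]_n}) (s : 'rV['F_2]_n -> R) x :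
  is_subgroup H -> is_subgroup K -> K \subset H ->
  (forall h, h \in H -> s h = 1 \/ s h = -1) ->
  (forall h h', h \in H -> h' \in H -> s (h + h') = s h * s h') ->
  (exists2 h0, h0 \in H & s h0 = -1) ->
  (forall k, k \in K -> s k = 1) ->
  Sg R A H s x ^+ 2 <= #|H|%:R * \sum_(h in H) (dd R A K (h + x) - dd R A H x) ^+ 2.
Proof.
move=> sH sK KH spm shom [h0 h0H sh0] sK1.
set c : R := #|H|%:R; set S := Sg R A H s x.
have cpos : 0 < c by rewrite ltr0n card_sg_gt0.
have ss : \sum_(h in H) s h = 0.
  have : \sum_(h in H) s h = - \sum_(h in H) s h.
    rewrite -{1}(shift_sum _ sH h0H) -sumrN; apply: eq_bigr => h hH.
    by rewrite shom // sh0 mulrN1.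
  move=> e; lra.
have sq : \sum_(h in H) s h ^+ 2 = c.
  rewrite /c -sum1_card natr_sum; apply: eq_bigr => h hH.
  by case: (spm h hH) => ->; rewrite ?expr1n ?sqrrN ?expr1n.
have cross : \sum_(h in H) ((dd R A K (h + x) - dd R A H x) * s h) = S.
  under eq_bigr => h _ do rewrite mulrBl.
  rewrite sumrB -mulr_sumr ss mulr0 subr0 /dd.
  under eq_bigr => h _ do rewrite mulrAC.
  rewrite -mulr_suml (@Dc_sum_shift R n A H K x s sH sK KH).
    by rewrite mulrAC mulfV ?mul1r // cardH_neq0.
  by move=> h k hH kK; rewrite (shom h k hH (subsetP KH k kK)) (sK1 k kK) mulr1.
have pos := sum_sq_lin (mem H) (fun h => dd R A K (h + x) - dd R A H x) s c S.
have : 0 <= \sum_(h in H) (c * (dd R A K (h + x) - dd R A H x) - S * s h) ^+ 2.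
  by apply: sumr_ge0 => h _; apply: sqr_ge0.
rewrite pos cross sq.
set X := \sum_(h in H) _.
move=> h; nra.
Qed.

Local Open Scope complex_scope.

Lemma char0 (R : realType) n (H : {set 'rV['F_2]_n}) (chi : 'rV['F_2]_n -> R[i]) :
  is_subgroup H -> is_character H chi -> chi 0 = 1.
Proof.
move=> [H0 _] [nz hom].
have e := hom 0 0 H0 H0; rewrite addr0 in e.
apply: (mulfI (nz 0 H0)); by rewrite mulr1 -e.
Qed.

Lemma char_pm (R : realType) n (H : {set 'rV['F_2]_n}) (chi : 'rV['F_2]_n -> R[i]) h :
  is_subgroup H -> is_character H chi -> h \in H -> chi h = 1 \/ chi h = -1.
Proof.
move=> sH cH hH; have := char0 sH cH; case: cH => nz hom.
rewrite -(addxx2 h) hom // -expr2 => /eqP; rewrite sqrf_eq1.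
by case/orP => /eqP; [left|right].
Qed.

Lemma char_re (R : realType) n (H : {set 'rV['F_2]_n}) (chi : 'rV['F_2]_n -> R[i]) h :
  is_subgroup H -> is_character H chi -> h \in H -> chi h = (complex.Re (chi h))%:C.
Proof.
move=> sH cH hH; case: (char_pm sH cH hH) => e; rewrite e //.
by rewrite raddfN.
Qed.

Lemma normC_real (R : realType) (x : R) : `|x%:C| = `|x|%:C.
Proof. by rewrite normc_def /= expr0n addr0 sqrtr_sqr. Qed.

Lemma sum_conv (R : realType) n (A H : {set 'rV['F_2]_n}) (chi : 'rV['F_2]_n -> R[i]) g :
  is_subgroup H -> is_character H chi ->
  \sum_(h in H) shifted_ind R A g h * chi h = (Sg R A H (fun h => complex.Re (chi h)) g)%:C.
Proof.
move=> sH cH; rewrite /Sg rmorph_sum; apply: eq_bigr => h hH.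
by rewrite rmorphM rmorph_nat /shifted_ind [in LHS](char_re sH cH hH).
Qed.

Lemma sig_pm (R : realType) n (H : {set 'rV['F_2]_n}) (chi : 'rV['F_2]_n -> R[i]) h :
  is_subgroup H -> is_character H chi -> h \in H -> complex.Re (chi h) = 1 \/ complex.Re (chi h) = -1.
Proof. by move=> sH cH hH; case: (char_pm sH cH hH) => ->; [left|right]. Qed.

Lemma sig_hom (R : realType) n (H : {set 'rV['F_2]_n}) (chi : 'rV['F_2]_n -> R[i]) h h' :
  is_subgroup H -> is_character H chi -> h \in H -> h' \in H ->
  complex.Re (chi (h + h')) = complex.Re (chi h) * complex.Re (chi h').
Proof.
move=> sH cH hH h'H; case: (cH) => _ hom.
by rewrite hom // (char_re sH cH hH) (char_re sH cH h'H) -rmorphM.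
Qed.

Lemma sig_nt (R : realType) n (H : {set 'rV['F_2]_n}) (chi : 'rV['F_2]_n -> R[i]) :
  is_subgroup H -> is_character H chi -> nontrivial_on H chi ->
  exists2 h0, h0 \in H & complex.Re (chi h0) = -1.
Proof.
move=> sH cH [h0 h0H ne]; exists h0 => //.
by case: (char_pm sH cH h0H) ne => -> //; rewrite eqxx.
Qed.

Lemma irreg_witness (R : realType) n (eps : R) (A H : {set 'rV['F_2]_n}) g :
  is_subgroup H -> ~ regular_value eps A H g ->
  exists chi : 'rV['F_2]_n -> R[i], [/\ is_character H chi, nontrivial_on H chi &
    eps * #|H|%:R < `|Sg R A H (fun h => complex.Re (chi h)) g|].
Proof.
move=> sH nreg.
case: (pselect (exists chi : 'rV['F_2]_n -> R[i], [/\ is_character H chi, nontrivial_on H chi &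
    eps * #|H|%:R < `|Sg R A H (fun h => complex.Re (chi h)) g|])) => // nex.
exfalso; apply: nreg => chi cH nt.
rewrite sum_conv // normC_real lecR leNgt; apply/negP => lt.
by apply: nex; exists chi.
Qed.

Definition coset n (H : {set 'rV['F_2]_n}) (g : 'rV['F_2]_n) : {set 'rV['F_2]_n} :=
  [set g + h | h in H].

Lemma mem_coset n (H : {set 'rV['F_2]_n}) g y : is_subgroup H ->
  (y \in coset H g) = (y + g \in H).
Proof.
move=> sH; apply/imsetP/idP => [[h hH ->]|yg].
  by rewrite addrC addrA addxx2 add0r.
by exists (y + g) => //; rewrite addrC -addrA addxx2 addr0.
Qed.

Lemma coset_eq n (H : {set 'rV['F_2]_n}) g y : is_subgroup H ->
  y \in coset H g -> coset H y = coset H g.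
Proof.
move=> sH; rewrite mem_coset // => yg; apply/setP => z.
rewrite !mem_coset //.
have -> : z + g = (z + y) + (y + g) by rewrite addrA -(addrA z) addxx2 addr0.
by rewrite (@sg_add_in n H (z + y) (y + g) sH yg).
Qed.

Lemma coset_self n (H : {set 'rV['F_2]_n}) g : is_subgroup H -> g \in coset H g.
Proof. by move=> sH; rewrite mem_coset // addxx2; case: sH. Qed.

Lemma card_coset n (H : {set 'rV['F_2]_n}) g : #|coset H g| = #|H|.
Proof. by rewrite card_imset //; apply: addrI. Qed.

Lemma coset_in n (H : {set 'rV['F_2]_n}) g : coset H g \in cosets H.
Proof. by apply/imsetP; exists g. Qed.

Lemma quot_card_mul n (H : {set 'rV['F_2]_n}) : is_subgroup H ->
  (quot_card H * #|H| = 2 ^ n)%N.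
Proof.
move=> sH.
have triv : trivIset (cosets H).
  apply/trivIsetP => _ _ /imsetP[a _ ->] /imsetP[b _ ->] ne.
  change (is_true (coset H a != coset H b)) in ne; change (is_true [disjoint coset H a & coset H b]).
  rewrite disjoint_subset; apply/subsetP => x xa; rewrite inE; apply/negP => xb.
  by move/negP: ne; apply; rewrite -(coset_eq sH xa) -(coset_eq sH xb).
have cov : cover (cosets H) = setT.
  apply/setP => x; rewrite inE; apply/bigcupP; exists (coset H x).
    exact: coset_in.
  exact: coset_self.
move: triv; rewrite /trivIset cov cardsT card_G2 => /eqP <-.
rewrite /quot_card -sum_nat_const; apply: eq_bigr => _ /imsetP[g _ ->].
by rewrite card_imset //; apply: addrI.
Qed.

Definition kerc (R : realType) n (c : 'rV['F_2]_n -> R[i]) : {set 'rV['F_2]_n} :=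
  [set h | c h == 1].
Definition Hs (R : realType) n (H : {set 'rV['F_2]_n}) (cs : seq ('rV['F_2]_n -> R[i])) :=
  H :&: \bigcap_(c <- cs) kerc c.

Lemma halve (R : realType) n (H S : {set 'rV['F_2]_n}) (c : 'rV['F_2]_n -> R[i]) :
  is_subgroup H -> is_character H c -> is_subgroup S -> S \subset H ->
  (#|S| <= 2 * #|S :&: kerc c|)%N.
Proof.
move=> sH cH sS SH.
rewrite -(cardsID (kerc c) S) mul2n -addnn leq_add2l.
case: (pickP (mem (S :\: kerc c))) => [h0 h0in|none]; last first.
  by rewrite (eq_card0 none).
move: h0in; rewrite !inE => /andP[nk0 h0S].
have c0 : c h0 = -1.
  by case: (char_pm sH cH (subsetP SH h0 h0S)) nk0 => ->; rewrite ?eqxx.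
rewrite -(card_imset _ (addIr h0)); apply: subset_leq_card.
apply/subsetP => _ /imsetP[h hin ->]; move: hin; rewrite !inE => /andP[nk hS].
have ch : c h = -1.
  by case: (char_pm sH cH (subsetP SH h hS)) nk => ->; rewrite ?eqxx.
case: sS => _ sD; rewrite sD //=.
case: cH => _ hom; rewrite hom ?(subsetP SH) // ch c0 mulrNN mulr1.
by [].
Qed.

Lemma Hs_prop (R : realType) n (H : {set 'rV['F_2]_n}) (cs : seq ('rV['F_2]_n -> R[i])) :
  is_subgroup H -> (forall c, c \in cs -> is_character H c) ->
  [/\ is_subgroup (Hs H cs), Hs H cs \subset H & (#|H| <= 2 ^ size cs * #|Hs H cs|)%N].
Proof.
move=> sH; elim: cs => [|c cs IH] allc.
  by rewrite /Hs big_nil setIT expn0 mul1n; split.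
have [sS SH cS] : [/\ is_subgroup (Hs H cs), Hs H cs \subset H & (#|H| <= 2 ^ size cs * #|Hs H cs|)%N].
  by apply: IH => d dcs; apply: allc; rewrite inE dcs orbT.
have cc : is_character H c by apply: allc; rewrite mem_head.
have -> : Hs H (c :: cs) = Hs H cs :&: kerc c by rewrite /Hs big_cons setIA setIAC.
split.
- split.
    rewrite in_setI; apply/andP; split; first by case: sS.
    by rewrite inE (char0 sH cc).
  move=> x y /setIP[xS cx] /setIP[yS cy].
  rewrite !inE in cx cy; move/eqP: cx => cx; move/eqP: cy => cy.
  apply/setIP; split; first by case: (sS) => _ sD; apply: sD.
  rewrite inE; case: cc => _ ->; rewrite ?cx ?cy ?mulr1 ?eqxx //;
  exact: (subsetP SH).
- exact: subset_trans (subsetIl _ _) SH.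
- have h2 := halve sH cc sS SH; apply: (leq_trans cS).
  by rewrite /= expnS (mulnC 2) -mulnA leq_mul2l h2 orbT.
Qed.

Definition repf n (C : {set 'rV['F_2]_n}) : 'rV['F_2]_n := odflt 0 [pick y in C].

Lemma rep_in n (H : {set 'rV['F_2]_n}) x : is_subgroup H -> repf (coset H x) \in coset H x.
Proof.
move=> sH; rewrite /repf; case: pickP => [y yC //|none].
by have := none x; rewrite /= coset_self.
Qed.

Lemma Sg_shift (R : realType) n (A H : {set 'rV['F_2]_n}) (chi : 'rV['F_2]_n -> R[i]) h1 x :
  is_subgroup H -> is_character H chi -> h1 \in H ->
  `|Sg R A H (fun h => complex.Re (chi h)) (h1 + x)| = `|Sg R A H (fun h => complex.Re (chi h)) x|.
Proof.
move=> sH cH h1H.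
have e : Sg R A H (fun h => complex.Re (chi h)) x =
   complex.Re (chi h1) * Sg R A H (fun h => complex.Re (chi h)) (h1 + x).
  rewrite /Sg -(shift_sum _ sH h1H) mulr_sumr; apply: eq_bigr => h hH.
  by rewrite (sig_hom sH cH hH h1H) addrA; ring.
rewrite e normrM; case: (sig_pm sH cH h1H) => ->; rewrite ?normrN normr1 mul1r //.
Qed.

Lemma bigcap_seq (R : realType) n (cs : seq ('rV['F_2]_n -> R[i])) k c :
  k \in \bigcap_(d <- cs) kerc d -> c \in cs -> c k = 1.
Proof.
elim: cs => [//|d cs IH]; rewrite big_cons inE => /andP[kd kcs].
rewrite inE => /orP[/eqP ->|ccs]; last exact: IH.
by move: kd; rewrite inE => /eqP.
Qed.

Lemma refine (R : realType) n (eps : R) (A H : {set 'rV['F_2]_n}) :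
  0 < eps -> is_subgroup H -> ~ regular_subgroup eps A H ->
  exists K, [/\ is_subgroup K, (quot_card K <= quot_card H * 2 ^ quot_card H)%N &
     En R A H + eps ^+ 3 * (2 ^ n)%:R < En R A K].
Proof.
move=> e0 sH nreg.
have chex : forall r : 'rV['F_2]_n, exists chi : 'rV['F_2]_n -> R[i], is_character H chi /\
   (~ regular_value eps A H r -> nontrivial_on H chi /\
      eps * #|H|%:R < `|Sg R A H (fun h => complex.Re (chi h)) r|).
  move=> r; case: (pselect (regular_value eps A H r)) => [reg|nr].
    exists (fun _ => 1); split => //; split => [x _|x y _ _].
      exact: oner_neq0.
    by rewrite mulr1.
  by have [chi [cH nt lt]] := irreg_witness sH nr; exists chi; split.
have [F hF] := choice chex.
pose Rs := (@repf n) @: cosets H.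
pose cs := [seq F r | r <- enum Rs].
have allc : forall c, c \in cs -> is_character H c.
  by move=> c /mapP[r _ ->]; case: (hF r).
have [sK KH cK] := Hs_prop sH allc.
exists (Hs H cs); split => //.
  have hR : (#|Rs| <= quot_card H)%N by apply: leq_imset_card.
  have sz : size cs = #|Rs| by rewrite size_map -cardE.
  have qH := quot_card_mul sH; have qK := quot_card_mul sK.
  have Kpos := card_sg_gt0 sK.
  rewrite -(leq_pmul2r Kpos) qK -qH -mulnA leq_mul2l; apply/orP; right.
  apply: (leq_trans cK); rewrite leq_mul2r; apply/orP; right.
  by rewrite sz; apply: leq_pexp2l.
set K := Hs H cs.
have Hpos : 0 < #|H|%:R :> R by rewrite ltr0n card_sg_gt0.
have eid := energy_id R A sH sK KH.
set Irr := [set g | ~~ `[< regular_value eps A H g >]].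
have cI : eps * (2 ^ n)%:R < #|Irr|%:R by rewrite ltNge; apply/negP.
have per : forall x, x \in Irr ->
    eps ^+ 2 * #|H|%:R <= \sum_(h in H) (dd R A K (h + x) - dd R A H x) ^+ 2.
  move=> x; rewrite inE => /asboolPn nrx.
  set r := repf (coset H x).
  have rin : r \in coset H x := rep_in x sH.
  have [chi [cH nt lt]] := irreg_witness sH nrx.
  have h1 : r + x \in H by rewrite -mem_coset.
  have xr : x = (r + x) + r by rewrite [r + x]addrC -addrA addxx2 addr0.
  have Sx : forall c, is_character H c ->
     `|Sg R A H (fun h => complex.Re (c h)) x| = `|Sg R A H (fun h => complex.Re (c h)) r|.
    by move=> c cc; rewrite {1}xr Sg_shift.
  have nrr : ~ regular_value eps A H r.
    move=> reg; have := reg chi cH nt; rewrite sum_conv // normC_real lecR.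
    by rewrite -Sx // leNgt lt.
  have [ntF ltF] := (hF r).2 nrr.
  have cF := (hF r).1.
  have Fin : F r \in cs.
    apply/mapP; exists r => //; rewrite mem_enum; apply/imsetP.
    by exists (coset H x) => //; apply: coset_in.
  have kerK : forall k, k \in K -> complex.Re (F r k) = 1.
    move=> k; rewrite /K /Hs => /setIP[_ kk].
    by rewrite (bigcap_seq kk Fin).
  have := per_x A x sH sK KH (fun h hH => sig_pm sH cF hH)
     (fun h h' hH h'H => sig_hom sH cF hH h'H) (sig_nt sH cF ntF) kerK.
  rewrite -(Sx _ cF) in ltF.
  set S := Sg _ _ _ _ _ in ltF *; set T := \sum_(h in H) _.
  have epsH : 0 <= eps * #|H|%:R by rewrite mulr_ge0 // ltW.
  have hS2 : `|S| ^+ 2 = S ^+ 2 by rewrite real_normK ?num_real.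
  have nS : 0 <= `|S| by [].
  move=> h3; nra.
have lb : #|Irr|%:R * (eps ^+ 2 * #|H|%:R) <=
    \sum_x \sum_(h in H) (dd R A K (h + x) - dd R A H x) ^+ 2.
  rewrite (bigID (mem Irr)) /= -[X in X <= _]addr0; apply: lerD.
    rewrite -sumr_const mulr_suml; apply: ler_sum => x xI; rewrite mul1r; exact: per.
  by apply: sumr_ge0 => x _; apply: sumr_ge0 => h _; apply: sqr_ge0.
rewrite eid in lb.
have lb2 : #|Irr|%:R * eps ^+ 2 <= En R A K - En R A H.
  rewrite -(ler_pM2l Hpos).
  have -> : #|H|%:R * (#|Irr|%:R * eps ^+ 2) = #|Irr|%:R * (eps ^+ 2 * #|H|%:R) :> R by ring.
  exact: lb.
have : eps ^+ 3 * (2 ^ n)%:R < #|Irr|%:R * eps ^+ 2.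
  rewrite exprSr mulrAC -mulrA [X in _ < X]mulrC ltr_pM2l ?exprn_gt0 //.
  by rewrite mulrC.
move=> h; lra.
Qed.

Lemma dd_bounds (R : realType) n (A H : {set 'rV['F_2]_n}) x :
  is_subgroup H -> 0 <= dd R A H x <= 1.
Proof.
move=> sH; have Hpos : 0 < #|H|%:R :> R by rewrite ltr0n card_sg_gt0.
have D0 : 0 <= Dc R A H x by apply: sumr_ge0 => h _; apply: ler0n.
have D1 : Dc R A H x <= #|H|%:R.
  rewrite -sum1_card natr_sum; apply: ler_sum => h _.
  by case: (_ \in A).
rewrite /dd divr_ge0 //= ler_pdivrMr // mul1r //.
Qed.

Lemma En_bounds (R : realType) n (A H : {set 'rV['F_2]_n}) :
  is_subgroup H -> 0 <= En R A H <= (2 ^ n)%:R.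
Proof.
move=> sH; apply/andP; split.
  by apply: sumr_ge0 => x _; apply: sqr_ge0.
rewrite -card_G2 -sum1_card natr_sum; apply: ler_sum => x _.
have /andP[a b] := @dd_bounds R n A H x sH.
by rewrite expr2; apply: mulr_ile1.
Qed.

Lemma tower_mono k : (tower k <= tower k.+1)%N.
Proof. by rewrite /= ltnW // ltn_expl. Qed.

Lemma dbl_le_exp T : (T + T <= 2 ^ T)%N.
Proof.
case: T => // T; rewrite expnS mul2n -addnn.
by apply: leq_add; apply: ltn_expl.
Qed.

Lemma tower_bound c k : (2 * c <= tower k.+1)%N -> (2 * (c * 2 ^ c) <= tower k.+2)%N.
Proof.
rewrite [tower k.+2]/= [tower k.+1]/=; set b := tower k => hc.
have bc : (b + c <= 2 ^ b)%N.
  have := dbl_le_exp b; move: hc; set p := (2 ^ b)%N; lia.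
apply: (@leq_trans (2 ^ b * 2 ^ c)).
  by rewrite mulnA leq_mul2r hc orbT.
by rewrite -expnD leq_pexp2l.
Qed.

Lemma iter_lemma (R : realType) n (eps : R) (A : {set 'rV['F_2]_n}) k :
  0 < eps -> exists H, [/\ is_subgroup H, (2 * quot_card H <= tower k.+1)%N &
    (regular_subgroup eps A H \/ k%:R * (eps ^+ 3 * (2 ^ n)%:R) <= En R A H)].
Proof.
move=> e0; elim: k => [|k [H [sH qH hH]]].
  have sT : is_subgroup [set: 'rV['F_2]_n] by split => // *; rewrite inE.
  exists [set: 'rV['F_2]_n]; split => //.
    have := quot_card_mul sT; rewrite cardsT card_G2 => qm.
    have p : (0 < 2 ^ n)%N by rewrite expn_gt0.
    have -> : quot_card [set: 'rV['F_2]_n] = 1%N.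
      by apply/eqP; rewrite -(eqn_pmul2r p) mul1n qm.
    by [].
  by right; rewrite mul0r; case/andP: (En_bounds R A sT).
case: hH => [reg|le].
  exists H; split => //; first exact: leq_trans qH (tower_mono _).
  by left.
have [nreg|] := pselect (regular_subgroup eps A H).
  exists H; split => //; first exact: leq_trans qH (tower_mono _).
  by left.
move=> nreg; have [K [sK qK eK]] := @refine R n eps A _ e0 sH nreg.
exists K; split => //.
  by apply: leq_trans (tower_bound qH); rewrite leq_mul2l qK orbT.
right; rewrite -addn1 natrD mulrDl mul1r; lra.
Qed.

Local Close Scope complex_scope.
Unset Implicit Arguments.

Theorem theorem2p1 (R : realType) (n : nat) (eps : R) (A : {set 'rV['F_2]_n}) :
  0 < eps -> eps < 1/2 ->
  exists H : {set 'rV['F_2]_n},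
    [/\ is_subgroup H, (quot_card H <= W (eps ^- 3))%N & regular_subgroup eps A H].
Proof.
move=> e0 _.
set c := Num.ceil (eps ^- 3).
have cge : eps ^- 3 <= c%:~R by apply: ceil_ge.
have cpos : 0 < c by rewrite /c ceil_gt0 invr_gt0 exprn_gt0.
have Kc : ((`|c|%N)%:R : R) = c%:~R by rewrite natr_absz gtr0_norm.
set K := `|c|%N.
have K0 : (0 < K)%N by rewrite /K absz_gt0 gt_eqF.
have [H [sH qH hH]] := @iter_lemma R n eps A K.-1 e0.
rewrite prednK // in qH.
exists H; split.
- done.
- by rewrite /W -/c -/K; apply: leq_trans qH; rewrite leq_pmull.
- case: hH => // le.
have [//|nreg] := pselect (regular_subgroup eps A H).
exfalso.
have [K' [sK' _ eK']] := @refine R n eps A _ e0 sH nreg.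
have := @En_bounds R n A _ sK'; case/andP => _ ub.
have Kge : 1 <= K%:R * eps ^+ 3.
  rewrite -/K in Kc; rewrite Kc.
  have ep3 : 0 < eps ^+ 3 by rewrite exprn_gt0.
  apply: (le_trans _ (ler_wpM2r (ltW ep3) cge)).
  by rewrite mulVf ?lt0r_neq0.
have N0 : 0 < (2 ^ n)%:R :> R by rewrite ltr0n expn_gt0.
have : K.-1%:R = K%:R - 1 :> R.
  by rewrite -[in RHS](prednK K0) -natr1 addrK.
move=> e; rewrite e in le.
have h : 0 <= (K%:R * eps ^+ 3 - 1) * (2 ^ n)%:R.
  by apply: mulr_ge0; [rewrite subr_ge0; exact: Kge | exact: ltW N0].
move: h le eK' ub; set x := eps ^+ 3; set N := (2 ^ n)%:R; set k := K%:R.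
move=> h le eK ub.
have : (k - 1) * (x * N) + x * N < N by lra.
move=> h2; nra.
Qed.
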